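(* Let $kQ/I$ be a string algebra such that $Q$ has neither loops nor oriented cycles. Then there is a coloring $c$ of $Q$ such that $kQ/I_c$ is a gentle string algebra and $I_c\subseteq I$, so that the identity of $kQ$ induces an algebra epimorphism $kQ/I_c\to kQ/I$.
   Context: Paths are composed right to left ($ba$ means $a$ then $b$ when $ha=tb$). A string algebra is a finite-dimensional algebra $kQ/I$ with $I$ generated by paths, such that (a) each vertex is the head of at most 2 arrows and the tail of at most 2 arrows, and (b) for each arrow $b$ there is at most one arrow $a$ with $ta=hb$ and $ab\notin I$, and at most one arrow $c'$ with $hc'=tb$ and $bc'\notin I$. It is a gentle string algebra if moreover (c) for each arrow $b$ there is at most one arrow $a$ with $ta=hb$ and $ab\in I$ and at most one arrow $c'$ with $hc'=tb$ and $bc'\in I$, and (d) $I$ is generated by paths of length 2. A coloring of $Q$ is a map $c:Q_1\to S$ to a finite set such that each $c^{-1}(s)$ is the set of arrows of a single directed path; $I_c$ is the ideal generated by all $ba$ with $ha=tb$, $c(a)=c(b)$. *)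

(* Defs.v *)
(* Combinatorial model of monomial (path) ideals in kQ. *)
From mathcomp Require Import all_boot.
Set Implicit Arguments. Unset Strict Implicit. Unset Printing Implicit Defensive.

Section Quiver.
Variables (V A : finType) (hd tl : A -> V).

(* A (nonempty) path is the list of its arrows in order of traversal:
   [:: a1; a2; ...; an] means a1, then a2, ..., i.e. the product an ... a2 a1
   in the right-to-left convention; consecutive arrows satisfy hd a_i = tl a_(i+1).
   So the product  b a  (a then b, ha = tb) is the list [:: a; b]. *)
Definition qpath (p : seq A) : bool :=
  if p is a :: s then path (fun x y => hd x == tl y) a s else false.

Definition in_ideal (G : seq A -> Prop) (p : seq A) : Prop :=
  exists u v w, p = u ++ v ++ w /\ G v.

Definition path_gens (G : seq A -> Prop) : Prop := forall q, G q -> qpath q.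

Definition fin_dim (G : seq A -> Prop) : Prop :=
  exists N, forall p, qpath p -> N <= size p -> in_ideal G p.

Definition at_most_one (P : A -> Prop) : Prop :=
  forall a1 a2, P a1 -> P a2 -> a1 = a2.

Definition string_algebra (G : seq A -> Prop) : Prop :=
  [/\ path_gens G, fin_dim G,
      (forall v, #|[set a | hd a == v]| <= 2 /\ #|[set a | tl a == v]| <= 2) &
      (forall b,
         at_most_one (fun a => tl a = hd b /\ ~ in_ideal G [:: b; a]) /\
         at_most_one (fun c' => hd c' = tl b /\ ~ in_ideal G [:: c'; b]))].

Definition gentle_string_algebra (G : seq A -> Prop) : Prop :=
  [/\ string_algebra G,
      (forall b,
         at_most_one (fun a => tl a = hd b /\ in_ideal G [:: b; a]) /\
         at_most_one (fun c' => hd c' = tl b /\ in_ideal G [:: c'; b])) &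
      (exists G2 : seq A -> Prop,
         (forall q, G2 q -> qpath q /\ size q = 2) /\
         (forall p, qpath p -> (in_ideal G2 p <-> in_ideal G p)))].

Definition coloring (S : finType) (c : A -> S) : Prop :=
  forall s, (exists a, c a = s) ->
    exists p, qpath p /\ forall a, (a \in p) = (c a == s).

Definition Ic_gens (S : finType) (c : A -> S) (q : seq A) : Prop :=
  match q with
  | [:: a; b] => hd a = tl b /\ c a = c b
  | _ => False
  end.

Definition no_loops : Prop := forall a, hd a <> tl a.

Definition no_oriented_cycles : Prop :=
  forall a s, qpath (a :: s) -> hd (last a s) <> tl a.

End Quiver.

(* Main.v *)
Require Import Defs.
From mathcomp Require Import all_boot zify.
From Stdlib Require Import Classical.
Set Implicit Arguments. Unset Strict Implicit. Unset Printing Implicit Defensive.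

Section S.
Variables (V A : finType) (hd tl : A -> V).
Hypothesis nl : no_loops hd tl.
Hypothesis nc : no_oriented_cycles hd tl.
Local Notation qp := (qpath hd tl).

Lemma qpathP (x0 : A) q : qp q <-> 0 < size q /\
  forall i, i.+1 < size q -> hd (nth x0 q i) = tl (nth x0 q i.+1).
Proof.
case: q => [|a s] /=; first by split => // [[]].
split.
- move=> /(pathP x0) H; split=> // i Hi; apply/eqP; exact: H.
- case=> _ H; apply/(pathP x0) => i Hi; apply/eqP; exact: H.
Qed.

Lemma nc' x0 q i j : qp q -> i <= j -> j < size q ->
  hd (nth x0 q j) <> tl (nth x0 q i).
Proof.
move=> Hq0 hij hj Heq; have /(qpathP x0) [_ Hq] := Hq0.
set s := drop i (take j.+1 q).
have Hs : size s = (j - i).+1 by rewrite /s size_drop size_take; case: ifP; lia.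
have Hn : forall k, k < size s -> nth x0 s k = nth x0 q (i + k).
  move=> k hk; rewrite /s nth_drop nth_take //; rewrite Hs in hk; lia.
case Es: s Hs Hn => [|a s'] // Hs Hn.
have ha : a = nth x0 q i by have := Hn 0 isT; rewrite addn0.
have Hqp : qp (a :: s').
  apply/(qpathP x0); split=> // k hk.
  rewrite /= in Hs hk; rewrite !Hn /=; try lia. rewrite addnS; apply: Hq; lia.
apply: (nc Hqp).
rewrite (last_nth x0) (_ : size s' = j - i); last by case: Hs.
rewrite Hn; last by rewrite Hs.
by rewrite subnKC // ha.
Qed.

Lemma keyL x0 q i j : qp q -> i < size q -> j < size q ->
  hd (nth x0 q i) = tl (nth x0 q j) -> j = i.+1.
Proof.
move=> Hq hi hj Heq.
case: (ltngtP j i.+1) => // h.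
- by exfalso; exact: (@nc' x0 q j i Hq h hi Heq).
- have /(qpathP x0) [_ Hadj] := Hq.
  exfalso; apply: (@nc' x0 q i.+1 j.-1 Hq); try lia.
  have h1 := Hadj j.-1 ltac:(simpl; lia); have h2 := Hadj i ltac:(simpl; lia).
  rewrite prednK in h1; last by lia.
  congruence.
Qed.


Lemma adj_cat p1 x y p2 : qp (p1 ++ x :: y :: p2) -> hd x = tl y.
Proof.
case: p1 => [|z p1] /=; first by case/andP => /eqP.
by rewrite cat_path => /andP [_] /= /and3P [_ /eqP ? _].
Qed.

Lemma qp_join p1 x y s : qp (rcons p1 x) -> qp (y :: s) -> hd x = tl y ->
  qp (p1 ++ x :: y :: s).
Proof.
case: p1 => [|z p1] /=; first by move=> _ -> ->; rewrite eqxx.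
rewrite rcons_path cat_path => /andP [H1 H2] Hy Hxy /=.
by rewrite H1 H2 Hxy eqxx Hy.
Qed.

Definition colP (c : A -> A) :=
  forall x, exists p, qp p /\ forall a, (a \in p) = (c a == c x).

Lemma color_ex (L : seq (A * A)) :
  (forall x y, (x, y) \in L -> hd x = tl y) ->
  (forall x y y', (x, y) \in L -> (x, y') \in L -> y = y') ->
  (forall x x' y, (x, y) \in L -> (x', y) \in L -> x = x') ->
  exists c : A -> A, colP c /\
    forall b a, hd b = tl a -> (c b = c a <-> (b, a) \in L).
Proof.
elim: L => [|[b0 a0] L IH] Hadj Hf Hi.
  exists id; split.
    by move=> x; exists [:: x]; split => // a; rewrite inE.
  move=> b a h; split => // Eba; exfalso; rewrite Eba in h; exact: nl h.
have sub : forall z, z \in L -> z \in (b0, a0) :: L by move=> z h; rewrite inE h orbT.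
have [c' [Hc' Hc'L]] : exists c' : A -> A, colP c' /\
    forall b a, hd b = tl a -> (c' b = c' a <-> (b, a) \in L).
  apply: IH.
  - by move=> x y h; apply: Hadj; apply: sub.
  - by move=> x y y' h1 h2; apply: (Hf x); apply: sub.
  - by move=> x x' y h1 h2; apply: (Hi x x' y); apply: sub.
case: (boolP ((b0, a0) \in L)) => hin.
  exists c'; split => // b a h; rewrite Hc'L // inE; split.
    by move->; rewrite orbT.
  by case/orP => // /eqP [-> ->].
have hba := Hadj b0 a0 (mem_head _ _).
have nc0 : c' b0 != c' a0.
  by apply/eqP => E; move: hin => /negP; apply; apply/Hc'L.
have [pb [Hpb Mpb]] := Hc' b0.
have [pa [Hpa Mpa]] := Hc' a0.
have hb0 : b0 \in pb by rewrite Mpb.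
have ha0 : a0 \in pa by rewrite Mpa.
move: Hpb Mpb; case/splitPr: hb0 => p1 p2 Hpb Mpb.
case: p2 Hpb Mpb => [|y p2] Hpb Mpb; last first.
  exfalso; have hy := adj_cat Hpb.
  have : c' y = c' b0 by apply/eqP; rewrite -Mpb mem_cat !inE eqxx !orbT.
  move=> /esym /(Hc'L _ _ hy) hL.
  have Ey := Hf _ _ _ (sub _ hL) (mem_head _ _); subst y.
  by rewrite hL in hin.
move: Hpa Mpa; case/splitPr: ha0 => q1 q2 Hpa Mpa.
case/lastP: q1 Hpa Mpa => [|r z] Hpa Mpa; last first.
  exfalso; rewrite cat_rcons in Hpa Mpa; have hz := adj_cat Hpa.
  have : c' z = c' a0 by apply/eqP; rewrite -Mpa mem_cat !inE eqxx !orbT.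
  move=> /(Hc'L _ _ hz) hL.
  have Ez := Hi _ _ _ (sub _ hL) (mem_head _ _); subst z.
  by rewrite hL in hin.
rewrite /= in Hpa Mpa.
set q := p1 ++ b0 :: a0 :: q2.
have Hq : qp q by apply: qp_join => //; rewrite -cats1.
have qPQ : q = (p1 ++ [:: b0]) ++ a0 :: q2 by rewrite -catA.
have Mq : forall x, (x \in q) = (c' x == c' b0) || (c' x == c' a0).
  by move=> x; rewrite qPQ mem_cat Mpb Mpa.
pose c := fun x => if c' x == c' a0 then c' b0 else c' x.
exists c; split.
  move=> x; case: (boolP (c x == c' b0)) => hx.
    exists q; split => // a; rewrite Mq (eqP hx) /c.
    case: (c' a =P c' a0) => [->|ne]; rewrite ?eqxx ?orbT //=.
    by rewrite orbF.
  have hx' : c' x != c' a0 by apply: contra hx; rewrite /c => ->; rewrite eqxx.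
  have [px [Hpx Mpx]] := Hc' x.
  exists px; split => // a; rewrite Mpx /c (negbTE hx').
  case: (c' a =P c' a0) => [E|ne] //.
  rewrite E eq_sym (negbTE hx'); apply/esym/negbTE; rewrite eq_sym; move: hx; by rewrite /c (negbTE hx').
move=> b a hab; split; last first.
  rewrite inE => /orP [/eqP [-> ->]|hL].
    by rewrite /c (negbTE nc0) eqxx.
  by rewrite /c (proj2 (Hc'L _ _ hab) hL).
move=> E; rewrite inE.
case: (boolP (c' b == c' a)) => E'.
  by apply/orP; right; apply/Hc'L => //; apply/eqP.
apply/orP; left.
have sP : size (p1 ++ [:: b0]) = (size p1).+1 by rewrite size_cat addn1.
have iP : forall x, c' x = c' b0 -> index x q <= size p1.
  move=> x hx; rewrite qPQ index_cat Mpb hx eqxx -ltnS -sP index_mem Mpb hx.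
  by rewrite eqxx.
have iQ : forall x, c' x = c' a0 -> (size p1).+1 <= index x q.
  move=> x hx; rewrite qPQ index_cat Mpb hx eq_sym (negbTE nc0) sP.
  exact: leq_addr.
have key : forall x y, x \in q -> y \in q -> hd x = tl y ->
    index y q = (index x q).+1.
  move=> x y hx hy h; apply: (@keyL b0 q) => //; rewrite ?index_mem ?nth_index //.
have nthq : forall k, nth b0 q (size p1 + k) = nth b0 (b0 :: a0 :: q2) k.
  by move=> k; rewrite /q nth_cat ltnNge leq_addr /= addKn.
move: E; rewrite /c.
case: (c' b =P c' a0) => hb; case: (c' a =P c' a0) => ha.
- by rewrite hb ha eqxx in E'.
- move=> Eq; have := key b a; rewrite !Mq hb -Eq !eqxx ?orbT.
  move=> /(_ isT isT hab); have := iQ b hb; have := iP a (esym Eq); lia.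
- move=> Eq; have := key b a; rewrite !Mq ha Eq !eqxx ?orbT.
  move=> /(_ isT isT hab) hk; have := iP b Eq; have := iQ a ha => h1 h2.
  have ib : index b q = size p1 + 0 by lia.
  have ia : index a q = size p1 + 1 by lia.
  have hbq : b \in q by rewrite Mq Eq eqxx.
  have haq : a \in q by rewrite Mq ha eqxx orbT.
  by rewrite -(nth_index b0 hbq) -(nth_index b0 haq) ib ia !nthq.
- by move=> Eq; rewrite Eq eqxx in E'.
Qed.


Lemma qp_size p : qp p -> size p <= #|V|.
Proof.
case: p => [|a s] Hp; first by [].
have U : uniq (map tl (a :: s)).
  apply/(uniqP (tl a)) => i j hi hj; rewrite !inE /= size_map in hi hj.
  rewrite !(nth_map a) // => E.
  have /(qpathP a) [_ Hadj] := Hp.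
  case: (ltngtP i j) => // h; exfalso.
  - have h1 := Hadj j.-1 ltac:(simpl; lia); rewrite prednK in h1; last by lia.
    have := @keyL a (a :: s) j.-1 i Hp ltac:(simpl; lia) hi ltac:(congruence); lia.
  - have h1 := Hadj i.-1 ltac:(simpl; lia); rewrite prednK in h1; last by lia.
    have := @keyL a (a :: s) i.-1 j Hp ltac:(simpl; lia) hj ltac:(congruence); lia.
by rewrite -(size_map tl) -(card_uniqP U) max_card.
Qed.

Lemma three (T : finType) (S : {set T}) x y z : #|S| <= 2 ->
  x \in S -> y \in S -> z \in S -> x = y \/ x = z \/ y = z.
Proof.
move=> hS hx hy hz.
case: (x =P y) => [|nxy]; first by left.
case: (x =P z) => [|nxz]; first by right; left.
case: (y =P z) => [|nyz]; first by right; right.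
exfalso.
have : #|x |: (y |: [set z])| <= #|S|.
  apply: subset_leq_card; apply/subsetP => w; rewrite !inE; case: (w =P x) => [-> //|_]; case: (w =P y) => [-> //|_]; case: (w =P z) => [-> //|_]; done.
rewrite !cardsU1 cards1 !inE (introF eqP nxy) (introF eqP nxz) (introF eqP nyz) /=.
move=> h; have := leq_trans h hS; done.
Qed.

End S.

Section S2.
Variables (V A : finType) (hd tl : A -> V) (G : seq A -> Prop).
Hypothesis HS : string_algebra hd tl G.

Definition PV v (Lv : seq (A * A)) := [/\
  (forall x y, (x, y) \in Lv -> hd x = v /\ tl y = v /\ in_ideal G [:: x; y]),
  (forall x y y', (x, y) \in Lv -> (x, y') \in Lv -> y = y'),
  (forall x x' y, (x, y) \in Lv -> (x', y) \in Lv -> x = x'),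
  (forall b a1 a2, hd b = v -> tl a1 = v -> tl a2 = v -> a1 <> a2 ->
     exists a, (b, a) \in Lv) &
  (forall a b1 b2, tl a = v -> hd b1 = v -> hd b2 = v -> b1 <> b2 ->
     exists b, (b, a) \in Lv)].

Lemma pv_ex v : exists Lv, PV v Lv.
Proof.
case: HS => _ _ Ha Hb.
have In3 : forall x y z, hd x = v -> hd y = v -> hd z = v -> x = y \/ x = z \/ y = z.
  move=> x y z hx hy hz; apply: (three (S := [set a | hd a == v])); rewrite ?inE ?hx ?hy ?hz //.
  exact: (Ha v).1.
have Out3 : forall x y z, tl x = v -> tl y = v -> tl z = v -> x = y \/ x = z \/ y = z.
  move=> x y z hx hy hz; apply: (three (S := [set a | tl a == v])); rewrite ?inE ?hx ?hy ?hz //.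
  exact: (Ha v).2.
have SA : forall b a1 a2, hd b = v -> tl a1 = v -> tl a2 = v ->
    ~ in_ideal G [:: b; a1] -> ~ in_ideal G [:: b; a2] -> a1 = a2.
  move=> b a1 a2 hb h1 h2 n1 n2; apply: ((Hb b).1 a1 a2); split => //; congruence.
have SA' : forall a b1 b2, tl a = v -> hd b1 = v -> hd b2 = v ->
    ~ in_ideal G [:: b1; a] -> ~ in_ideal G [:: b2; a] -> b1 = b2.
  move=> a b1 b2 ha h1 h2 n1 n2; apply: ((Hb a).2 b1 b2); split => //; congruence.
have mk0 : (forall b a1 a2, hd b = v -> tl a1 = v -> tl a2 = v -> a1 <> a2 -> False) ->
    (forall a b1 b2, tl a = v -> hd b1 = v -> hd b2 = v -> b1 <> b2 -> False) ->
    exists Lv, PV v Lv.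
  move=> N1 N2; exists [::]; split => //.
  - by move=> b a1 a2 *; exfalso; apply: (N1 b a1 a2).
  - by move=> a b1 b2 *; exfalso; apply: (N2 a b1 b2).
have mk1 : forall b a, hd b = v -> tl a = v -> in_ideal G [:: b; a] ->
    (forall b' a1 a2, hd b' = v -> tl a1 = v -> tl a2 = v -> a1 <> a2 -> b' = b) ->
    (forall a' b1 b2, tl a' = v -> hd b1 = v -> hd b2 = v -> b1 <> b2 -> a' = a) ->
    exists Lv, PV v Lv.
  move=> b a hb ha hP N1 N2; exists [:: (b, a)]; split.
  - by move=> x y; rewrite inE => /eqP [-> ->].
  - by move=> x y y'; rewrite !inE => /eqP [_ ->] /eqP [_ ->].
  - by move=> x x' y; rewrite !inE => /eqP [-> _] /eqP [-> _].
  - move=> b' a1 a2 *; exists a; rewrite (N1 b' a1 a2) //; exact: mem_head.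
  - move=> a' b1 b2 *; exists b; rewrite (N2 a' b1 b2) //; exact: mem_head.
have mk2 : forall x1 x2 y1 y2, hd x1 = v -> hd x2 = v -> x1 <> x2 ->
    tl y1 = v -> tl y2 = v -> y1 <> y2 ->
    in_ideal G [:: x1; y1] -> in_ideal G [:: x2; y2] -> exists Lv, PV v Lv.
  move=> x1 x2 y1 y2 hx1 hx2 nx hy1 hy2 ny p1 p2.
  exists [:: (x1, y1); (x2, y2)]; split.
  - by move=> x y; rewrite !inE => /orP [] /eqP [-> ->].
  - move=> x y y'; rewrite !inE => /orP [] /eqP [E1 E2] /orP [] /eqP [E3 E4];
    congruence.
  - move=> x x' y; rewrite !inE => /orP [] /eqP [E1 E2] /orP [] /eqP [E3 E4];
    congruence.
  - move=> b a1 a2 hb *; have [->|[->|//]] := In3 b x1 x2 hb hx1 hx2.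
      by exists y1; rewrite inE eqxx.
    by exists y2; rewrite !inE eqxx orbT.
  - move=> a b1 b2 ha *; have [->|[->|//]] := Out3 a y1 y2 ha hy1 hy2.
      by exists x1; rewrite inE eqxx.
    by exists x2; rewrite !inE eqxx orbT.
case: (classic (exists a1 a2, tl a1 = v /\ tl a2 = v /\ a1 <> a2)) => Dout;
case: (classic (exists b1 b2, hd b1 = v /\ hd b2 = v /\ b1 <> b2)) => Din.
- move: Dout Din => [a1 [a2 [h1 [h2 na]]]] [b1 [b2 [g1 [g2 nb]]]].
  have d1 : in_ideal G [:: b1; a1] \/ in_ideal G [:: b1; a2].
    by apply: NNPP => H; apply: na; apply: (SA b1) => //; tauto.
  have d2 : in_ideal G [:: b2; a1] \/ in_ideal G [:: b2; a2].
    by apply: NNPP => H; apply: na; apply: (SA b2) => //; tauto.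
  have d3 : in_ideal G [:: b1; a1] \/ in_ideal G [:: b2; a1].
    by apply: NNPP => H; apply: nb; apply: (SA' a1) => //; tauto.
  have d4 : in_ideal G [:: b1; a2] \/ in_ideal G [:: b2; a2].
    by apply: NNPP => H; apply: nb; apply: (SA' a2) => //; tauto.
  case: (classic (in_ideal G [:: b1; a1] /\ in_ideal G [:: b2; a2])) => [[p q]|N1].
    exact: (mk2 b1 b2 a1 a2).
  case: (classic (in_ideal G [:: b1; a2] /\ in_ideal G [:: b2; a1])) => [[p q]|N2].
    by apply: (mk2 b1 b2 a2 a1) => // E; apply: na.
  exfalso; tauto.
- case: (classic (exists b, hd b = v)) => [[b hb]|nob]; last first.
    apply: mk0 => [b|a b1] *; [by apply: nob; exists b | by apply: nob; exists b1].
  move: (Dout) => [a1 [a2 [h1 [h2 na]]]].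
  have NB : forall b' a1 a2, hd b' = v -> tl a1 = v -> tl a2 = v -> a1 <> a2 -> b' = b.
    move=> b' *; apply: NNPP => ne; apply: Din; by exists b', b.
  have NA : forall a' b1 b2, tl a' = v -> hd b1 = v -> hd b2 = v -> b1 <> b2 -> a' = a1.
    move=> a' b1 b2 _ hb1 hb2 nb; exfalso; apply: Din; by exists b1, b2.
  have NA2 : forall a' b1 b2, tl a' = v -> hd b1 = v -> hd b2 = v -> b1 <> b2 -> a' = a2.
    move=> a' b1 b2 _ hb1 hb2 nb; exfalso; apply: Din; by exists b1, b2.
  have [p|p] : in_ideal G [:: b; a1] \/ in_ideal G [:: b; a2].
    by apply: NNPP => H; apply: na; apply: (SA b) => //; tauto.
  + exact: (mk1 b a1).
  + exact: (mk1 b a2).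
- case: (classic (exists a, tl a = v)) => [[a ha]|noa]; last first.
    apply: mk0 => [b a1|a b1] *; [by apply: noa; exists a1 | by apply: noa; exists a].
  move: (Din) => [b1 [b2 [h1 [h2 nb]]]].
  have NA : forall a' b1 b2, tl a' = v -> hd b1 = v -> hd b2 = v -> b1 <> b2 -> a' = a.
    move=> a' *; apply: NNPP => ne; apply: Dout; by exists a', a.
  have NB : forall b' a1 a2, hd b' = v -> tl a1 = v -> tl a2 = v -> a1 <> a2 -> b' = b1.
    move=> b' a1 a2 _ ha1 ha2 na; exfalso; apply: Dout; by exists a1, a2.
  have NB2 : forall b' a1 a2, hd b' = v -> tl a1 = v -> tl a2 = v -> a1 <> a2 -> b' = b2.
    move=> b' a1 a2 _ ha1 ha2 na; exfalso; apply: Dout; by exists a1, a2.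
  have [p|p] : in_ideal G [:: b1; a] \/ in_ideal G [:: b2; a].
    by apply: NNPP => H; apply: nb; apply: (SA' a) => //; tauto.
  + exact: (mk1 b1 a).
  + exact: (mk1 b2 a).
- apply: mk0.
  + by move=> b a1 a2 _ h1 h2 n; apply: Dout; exists a1, a2.
  + by move=> a b1 b2 _ h1 h2 n; apply: Din; exists b1, b2.
Qed.


Lemma L_ex : exists L : seq (A * A), [/\
  (forall x y, (x, y) \in L -> hd x = tl y /\ in_ideal G [:: x; y]),
  (forall x y y', (x, y) \in L -> (x, y') \in L -> y = y'),
  (forall x x' y, (x, y) \in L -> (x', y) \in L -> x = x'),
  (forall b a1 a2, tl a1 = hd b -> tl a2 = hd b -> a1 <> a2 ->
     exists a, (b, a) \in L) &
  (forall a b1 b2, hd b1 = tl a -> hd b2 = tl a -> b1 <> b2 ->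
     exists b, (b, a) \in L)].
Proof.
have [Lf HLf] := fin_all_exists pv_ex.
exists (flatten [seq Lf v | v <- enum V]).
have memL : forall x y, (x, y) \in flatten [seq Lf v | v <- enum V] <-> (x, y) \in Lf (hd x).
  move=> x y; split.
  - case/flatten_mapP => v _ h; have [H1 _ _ _ _] := HLf v.
    by have [-> _] := H1 _ _ h.
  - by move=> h; apply/flatten_mapP; exists (hd x); rewrite ?mem_enum.
split.
- move=> x y /memL h; have [H1 _ _ _ _] := HLf (hd x); have [_ [? ?]] := H1 _ _ h.
  by split; congruence.
- move=> x y y' /memL h1 /memL h2; have [_ H2 _ _ _] := HLf (hd x); exact: H2 h1 h2.
- move=> x x' y /memL h1 /memL h2.
  have [H1 _ _ _ _] := HLf (hd x); have [_ [e1 _]] := H1 _ _ h1.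
  have [H1' _ _ _ _] := HLf (hd x'); have [_ [e2 _]] := H1' _ _ h2.
  have [_ _ H3 _ _] := HLf (hd x); apply: (H3 _ _ y h1); congruence.
- move=> b a1 a2 h1 h2 n; have [_ _ _ H4 _] := HLf (hd b).
  have [a ha] := H4 b a1 a2 erefl h1 h2 n; exists a; exact/memL.
- move=> a b1 b2 h1 h2 n; have [H1 _ _ _ H5] := HLf (tl a).
  have [b hb] := H5 a b1 b2 erefl h1 h2 n; exists b; apply/memL.
  by have [-> _] := H1 _ _ hb.
Qed.

End S2.

Theorem mainTheorem3 (V A : finType) (hd tl : A -> V) (G : seq A -> Prop) :
  string_algebra hd tl G ->
  no_loops hd tl ->
  no_oriented_cycles hd tl ->
  exists (S : finType) (c : A -> S),
    coloring hd tl c /\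
    gentle_string_algebra hd tl (Ic_gens hd tl c) /\
    (forall p, qpath hd tl p -> in_ideal (Ic_gens hd tl c) p -> in_ideal G p).
Proof.
move=> HS nl nc.
have [L [H1 H2 H3 H4 H5]] := L_ex HS.
have [c [Hc HcL]] := color_ex nl nc (fun x y h => (H1 x y h).1) H2 H3.
exists A, c.
have Ic2 : forall x y, in_ideal (Ic_gens hd tl c) [:: x; y] <-> hd x = tl y /\ c x = c y.
  move=> x y; split.
  - case=> u [w' [w [E Hg]]].
    case: w' Hg E => [|z1 [|z2 [|z3 v']]] //= Hg E.
    case: u E => [|u0 [|u1 u]] /=.
    + by case=> -> ->.
    + by case=> _ /esym; case: w.
    + by case=> _; case: u.
  - by move=> h; exists [::], [:: x; y], [::].
case: (HS) => _ _ Ha Hb.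
split.
  move=> s [a <-]; have [p [Hp Mp]] := Hc a; by exists p.
split; last first.
  move=> p _ [u [v [w [-> Hv]]]].
  case: v Hv => [|x [|y [|z v]]] //= [hxy hcxy].
  have /H1 [_ [u' [v' [w' [E Hg]]]]] : (x, y) \in L by apply/HcL.
  exists (u ++ u'), v', (w' ++ w); split => //.
  by rewrite -[[:: x, y & w]]/([:: x; y] ++ w) E -!catA.
split; last first.
  exists (Ic_gens hd tl c); split => //.
  by move=> q; case: q => [|x [|y [|z q]]] //= [h _]; rewrite h eqxx.
- move=> b; split.
  + move=> a1 a2 [h1 /Ic2 [e1 c1]] [h2 /Ic2 [e2 c2]].
    by apply: (H2 b); apply/HcL.
  + move=> a1 a2 [h1 /Ic2 [e1 c1]] [h2 /Ic2 [e2 c2]].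
    by apply: (H3 _ _ b); apply/HcL.
split.
- by move=> q; case: q => [|x [|y [|z q]]] //= [h _]; rewrite h eqxx.
- exists #|V|.+1 => p Hp hs; exfalso.
  have := qp_size nc Hp; move=> h; have := leq_trans hs h; by rewrite ltnn.
- exact: Ha.
- move=> b; split.
  + move=> a1 a2 [h1 n1] [h2 n2].
    case: (a1 =P a2) => // ne; exfalso.
    have [a ha] := H4 b a1 a2 h1 h2 ne.
    have [eba _] := H1 _ _ ha.
    have cba : c b = c a by apply/HcL.
    have : a = a1 \/ a = a2 \/ a1 = a2.
      apply: (three (S := [set x | tl x == hd b])); rewrite ?inE -?eba ?h1 ?h2 //.
      exact: (Ha (hd b)).2.
    case=> [E|[E|E]] //.
    * by apply: n1; apply/Ic2; rewrite -E.
    * by apply: n2; apply/Ic2; rewrite -E.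
  + move=> a1 a2 [h1 n1] [h2 n2].
    case: (a1 =P a2) => // ne; exfalso.
    have [a ha] := H5 b a1 a2 h1 h2 ne.
    have [eba _] := H1 _ _ ha.
    have cba : c a = c b by apply/HcL.
    have : a = a1 \/ a = a2 \/ a1 = a2.
      apply: (three (S := [set x | hd x == tl b])); rewrite ?inE ?eba ?h1 ?h2 //.
      exact: (Ha (tl b)).1.
    case=> [E|[E|E]] //.
    * by apply: n1; apply/Ic2; rewrite -E.
    * by apply: n2; apply/Ic2; rewrite -E.
Qed.
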